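(* Let $P\in\mathbb{R}^{n\times n}$ be a symmetric matrix with $\operatorname{rank}(P)=K$. Suppose $V\in\mathbb{R}^{n\times K}$ satisfies the following three conditions: (i) (Eigenbasis) $V$ is a basis of the column space of $P$, i.e. $V$ has full column rank $K$ and $P=VU^\top$ for some $U\in\mathbb{R}^{n\times K}$; (ii) (Non-negativity) $V_{ik}\ge 0$ for all $i\in[n]$, $k\in[K]$; (iii) (Pure rows) for each $k=1,\dots,K$ there is a row index $i_k$ with $V_{i_k k}>0$ and $V_{i_k j}=0$ for all $j\neq k$. If $\widetilde V\in\mathbb{R}^{n\times K}$ also satisfies (i)–(iii) (with the same $P$), then there exists a permutation matrix $Q\in\{0,1\}^{K\times K}$ such that $\operatorname{supp}(V)=\operatorname{supp}(\widetilde V Q)$.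
   Context: For a matrix $M$, $\operatorname{supp}(M)=\{(i,j): M_{ij}\neq 0\}$ denotes the set of its non-zero entries. $[n]=\{1,\dots,n\}$. *)

(* Defs.v *)
From HB Require Import structures.
From mathcomp Require Import all_boot all_order all_algebra all_fingroup.
From mathcomp Require Import reals.
Set Implicit Arguments. Unset Strict Implicit. Unset Printing Implicit Defensive.
Import Order.TTheory GRing.Theory Num.Theory.
Local Open Scope ring_scope.

Definition eigenbasis (R : realType) (n K : nat) (P : 'M[R]_n) (V : 'M[R]_(n, K)) : Prop :=
  \rank V = K /\ exists U : 'M[R]_(n, K), P = V *m U^T.

Definition nonneg_mx (R : realType) (n K : nat) (V : 'M[R]_(n, K)) : Prop :=
  forall i k, 0 <= V i k.

Definition pure_rows (R : realType) (n K : nat) (V : 'M[R]_(n, K)) : Prop :=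
  forall k : 'I_K, exists i : 'I_n, 0 < V i k /\ forall j : 'I_K, j != k -> V i j = 0.

Definition valid_V (R : realType) (n K : nat) (P : 'M[R]_n) (V : 'M[R]_(n, K)) : Prop :=
  eigenbasis P V /\ nonneg_mx V /\ pure_rows V.

Definition same_supp (R : realType) (m p : nat) (M N : 'M[R]_(m, p)) : Prop :=
  forall i j, (M i j != 0) = (N i j != 0).

(* Main.v *)
Require Import Defs.
From HB Require Import structures.
From mathcomp Require Import all_boot all_order all_algebra all_fingroup.
From mathcomp Require Import reals.
Import Order.TTheory GRing.Theory Num.Theory.
Local Open Scope ring_scope.

Section Aux.
Set Implicit Arguments.
Variable R : realType.

Lemma colspace_eq (n K : nat) (P : 'M[R]_n) (V Vt : 'M[R]_(n, K)) :
  \rank P = K -> eigenbasis P V -> eigenbasis P Vt ->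
  exists B : 'M[R]_K, Vt = V *m B.
Proof.
move=> rP [rV [U PU]] [rVt [Ut PUt]].
have h1 : (P^T <= V^T)%MS by rewrite PU trmx_mul trmxK submxMl.
have h2 : (P^T <= Vt^T)%MS by rewrite PUt trmx_mul trmxK submxMl.
have e2 : (Vt^T <= P^T)%MS by rewrite -(mxrank_leqif_sup h2).2 !mxrank_tr rVt rP.
have h3 : (Vt^T <= V^T)%MS by apply: submx_trans h1.
case/submxP: h3 => D hD; exists D^T.
by rewrite -[Vt]trmxK hD trmx_mul trmxK.
Qed.

Lemma cancel_inv (n K : nat) (V : 'M[R]_(n, K)) (B C : 'M[R]_K) :
  \rank V = K -> V = V *m B *m C -> B *m C = 1%:M.
Proof.
move=> rV h.
have rf : row_free V^T by rewrite /row_free mxrank_tr rV.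
apply: trmx_inj; apply: (row_free_inj rf).
by rewrite trmx1 mul1mx -trmx_mul mulmxA -h.
Qed.

Lemma B_nonneg (n K : nat) (V Vt : 'M[R]_(n, K)) (B : 'M[R]_K) :
  pure_rows V -> nonneg_mx Vt -> Vt = V *m B -> forall k j, 0 <= B k j.
Proof.
move=> pV nVt hB k j.
have [i [pos z]] := pV k.
have : Vt i j = V i k * B k j.
  rewrite hB !mxE (bigD1 k) //= big1 ?addr0 // => l lk.
  by rewrite z // mul0r.
move=> e; have := nVt i j; rewrite e pmulr_rge0 //.
Qed.

Lemma row_nz (K : nat) (C B : 'M[R]_K) k :
  C *m B = 1%:M -> exists j, C k j != 0.
Proof.
move=> h; case: (pickP (fun j => C k j != 0)) => [j hj|H]; first by exists j.
have : (C *m B) k k = 0.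
  rewrite mxE big1 // => j _; by move: (H j) => /= /negbFE/eqP ->; rewrite mul0r.
by rewrite h mxE eqxx /= => /eqP; rewrite oner_eq0.
Qed.

Lemma offdiag0 (K : nat) (B C : 'M[R]_K) l m j :
  (forall a b, 0 <= B a b) -> (forall a b, 0 <= C a b) ->
  B *m C = 1%:M -> l != m -> 0 < B l j -> C j m = 0.
Proof.
move=> nB nC h lm pos.
have : (B *m C) l m = 0 by rewrite h mxE (negbTE lm).
rewrite mxE => /eqP; rewrite psumr_eq0; last by move=> k _; rewrite mulr_ge0.
move=> /allP /(_ j (mem_index_enum _)) /=; rewrite mulf_eq0 gt_eqF //= => /eqP //.
Qed.

Lemma monomial (K : nat) (B C : 'M[R]_K) :
  (forall a b, 0 <= B a b) -> (forall a b, 0 <= C a b) ->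
  B *m C = 1%:M -> C *m B = 1%:M ->
  exists f : 'S_K, forall l j, (B l j != 0) = (j == f l).
Proof.
move=> nB nC hBC hCB.
have ex : forall i, exists k, 0 < B i k.
  move=> i; have [k hk] := row_nz i hBC; exists k.
  by rewrite lt_def hk nB.
pose f i := xchoose (ex i).
have fP i : 0 < B i (f i) := xchooseP (ex i).
have uniq_col : forall l l' j, 0 < B l j -> 0 < B l' j -> l = l'.
  move=> l l' j p1 p2; apply/eqP; apply/negPn/negP => ll'.
  have [m hm] := row_nz j hCB.
  case: (eqVneq m l) => [eml|nml].
    have l'l : l' != l by rewrite eq_sym.
    by rewrite eml (@offdiag0 K B C l' l j nB nC hBC l'l p2) eqxx in hm.
  have lm : l != m by rewrite eq_sym.
  by rewrite (@offdiag0 K B C l m j nB nC hBC lm p1) eqxx in hm.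
have finj : injective f.
  by move=> a b e; apply: (uniq_col a b (f a)) => //; rewrite e.
exists (perm finj) => l j; rewrite permE.
apply/idP/idP => [nz|/eqP ->]; last by rewrite gt_eqF.
have pj : 0 < B l j by rewrite lt_def nz nB.
set l'' := ((perm finj)^-1)%g j.
have ej : j = f l'' by rewrite /l'' -[in LHS](permKV (perm finj) j) permE.
have := fP l''; rewrite -ej => p2.
by rewrite (uniq_col l l'' j pj p2) ej.
Qed.

End Aux.

Theorem proposition1 (R : realType) (n K : nat) (P : 'M[R]_n)
  (V Vt : 'M[R]_(n, K)) :
  P^T = P -> \rank P = K ->
  valid_V P V -> valid_V P Vt ->
  exists s : 'S_K, same_supp V (Vt *m perm_mx s).
Proof.
move=> _ rP [eV [nV pV]] [eVt [nVt pVt]].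
have [B hB] := colspace_eq rP eV eVt.
have [C hC] := colspace_eq rP eVt eV.
have nB := B_nonneg pV nVt hB.
have nC := B_nonneg pVt nV hC.
have hBC : B *m C = 1%:M by apply: (cancel_inv eV.1); rewrite -hB -hC.
have hCB : C *m B = 1%:M by apply: (cancel_inv eVt.1); rewrite -hC -hB.
have [f hf] := monomial nB nC hBC hCB.
exists (f^-1)%g => i j.
rewrite -col_permE !mxE hB mxE (bigD1 j) //= big1 ?addr0.
  rewrite mulf_eq0 negb_or; have := hf j (f j); rewrite eqxx => ->.
  by rewrite andbT.
move=> l lj; have : f j != f l by apply: contra lj => /eqP/perm_inj ->.
by rewrite -(hf l (f j)) => /negbNE/eqP ->; rewrite mulr0.
Qed.
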